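(* Consider Algorithm iR2N (described in the context), suppose (A1), (A2), (A3), (A4), (A6), (A7) hold and that the algorithm generates infinitely many successful iterations. Let $\epsilon>0$, $k_\epsilon=\min\{k\in\mathbb{N}\mid \nu_k^{-1}\|\hat s_{k,\mathrm{cp}}\|<\epsilon\}$ and $\mathcal{S}(\epsilon)=\{k\in\mathbb{N}\mid \hat\rho_k\ge\hat\eta_1,\ k<k_\epsilon\}$. Then $$|\mathcal{S}(\epsilon)|\le \frac{(f+h)(x_0)-(f+h)_{\mathrm{low}}}{\tfrac12\eta_1(1-\theta_1)\nu_{\min}}\,\epsilon^{-2}=:\omega_s\epsilon^{-2}.$$
   Context: Setting. $f:\mathbb{R}^n\to\mathbb{R}$ is continuously differentiable, $h:\mathbb{R}^n\to\mathbb{R}\cup\{+\infty\}$ is proper and lower semicontinuous; the problem is $\min_x f(x)+h(x)$. $\|\cdot\|$ is the Euclidean norm (spectral norm for matrices). For each $x$, approximations $\hat f(x)\in\mathbb{R}$ of $f(x)$ and $\hat\nabla f(x)\in\mathbb{R}^n$ of $\nabla f(x)$ are available. For each $x$, $\psi(\cdot;x):\mathbb{R}^n\to\mathbb{R}\cup\{+\infty\}$ is proper, lsc, satisfies $\psi(0;x)=h(x)$ and $\partial\psi(0;x)\subseteq\partial h(x)$ ($\partial$ = limiting subdifferential), and is uniformly prox-bounded: there is $\lambda>0$ such that for every $x$ and every $0<\lambda'<\lambda$, $w\mapsto\psi(w;x)+\tfrac{1}{2\lambda'}\|w\|^2$ is bounded below. Models: $\varphi_{\mathrm{cp}}(s;x)=\hat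 f(x)+\hat\nabla f(x)^Ts$; $m_{\mathrm{cp}}(s;x,\nu^{-1})=\varphi_{\mathrm{cp}}(s;x)+\tfrac12\nu^{-1}\|s\|^2+\psi(s;x)$; for a symmetric $B(x)\in\mathbb{R}^{n\times n}$, $\varphi(s;x)=\hat f(x)+\hat\nabla f(x)^Ts+\tfrac12 s^TB(x)s$ and $m(s;x,\sigma)=\varphi(s;x)+\tfrac12\sigma\|s\|^2+\psi(s;x)$. Algorithm iR2N. Constants: $\kappa_f,\kappa_\nabla>0$, $0<\gamma_3\le 1<\gamma_1\le\gamma_2$, $0<\hat\eta_1\le\hat\eta_2<1$, $0<\theta_1<1<\theta_2$, $\sigma_{\min}>4\kappa_f\theta_1\theta_2^2/(\hat\eta_1(1-\theta_1))$, $\sigma_0\ge\sigma_{\min}$, $x_0\in\mathbb{R}^n$. At iteration $k=0,1,\dots$: choose symmetric $B_k=B(x_k)$; set $\nu_k=\theta_1/(\|B_k\|+\sigma_k)$; compute $\hat s_{k,\mathrm{cp}}$ with $m_{\mathrm{cp}}(\hat s_{k,\mathrm{cp}};x_k,\nu_k^{-1})\le m_{\mathrm{cp}}(0;x_k,\nu_k^{-1})$ (an approximate minimizer of $m_{\mathrm{cp}}(\cdot;x_k,\nu_k^{-1})$ obtained by a descent procedure from $s=0$) and set $\hat\xi_{k,\mathrm{cp}}=(\varphi_{\mathrm{cp}}+\psi)(0;x_k)-(\varphi_{\mathrm{cp}}+\psi)(\hat s_{k,\mathrm{cp}};x_k)$; compute $s_k$ with $m(s_k;x_k,\sigma_k)\le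 m(\hat s_{k,\mathrm{cp}};x_k,\sigma_k)$; if $\|s_k\|>\theta_2\|\hat s_{k,\mathrm{cp}}\|$, reset $s_k=\hat s_{k,\mathrm{cp}}$ (these computations are repeated with refined $\hat f,\hat\nabla f$ until (A6) holds). Compute $$\hat\rho_k=\frac{\hat f(x_k)+h(x_k)-\hat f(x_k+s_k)-h(x_k+s_k)}{\varphi(0;x_k)+\psi(0;x_k)-\varphi(s_k;x_k)-\psi(s_k;x_k)},$$ where $\varphi(\cdot;x_k)$ uses $B_k$. If $\hat\rho_k\ge\hat\eta_1$ (successful) set $x_{k+1}=x_k+s_k$, else $x_{k+1}=x_k$. Choose $\sigma_{k+1}\in[\gamma_3\sigma_k,\sigma_k]$ if $\hat\rho_k\ge\hat\eta_2$ (very successful), $\sigma_{k+1}\in[\sigma_k,\gamma_1\sigma_k]$ if $\hat\eta_1\le\hat\rho_k<\hat\eta_2$, $\sigma_{k+1}\in[\gamma_1\sigma_k,\gamma_2\sigma_k]$ if $\hat\rho_k<\hat\eta_1$; then reset $\sigma_{k+1}=\max(\sigma_{k+1},\sigma_{\min})$. Assumptions. (A1) $|f(x+s)-f(x)-\nabla f(x)^Ts|\le\tfrac12L\|s\|^2$ for all $x,s$, for some $L\ge0$. (A2) $\|B_k\|\le\kappa_B$ for all $k$, for some $\kappa_B>0$. (A3) $|\psi(s;x)-h(x+s)|\le\kappa_h\|s\|^2$ for all $x,s$, for some $\kappa_h>0$. (A4) For all $k$, $\varphi(0;x_k)+\psi(0;x_k)-(\varphi(s_k;x_k)+\psi(s_k;x_k))\ge(1-\theta_1)\hat\xi_{k,\mathrm{cp}}$.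 (A6) For all $k$: $|f(x_k)-\hat f(x_k)|\le\kappa_f\|s_k\|^2$, $|f(x_k+s_k)-\hat f(x_k+s_k)|\le\kappa_f\|s_k\|^2$, $\|\nabla f(x_k)-\hat\nabla f(x_k)\|\le\kappa_\nabla\|s_k\|$. (A7) There is $(f+h)_{\mathrm{low}}\in\mathbb{R}$ with $(f+h)(x)\ge(f+h)_{\mathrm{low}}$ for all $x$. Constants: $\eta_1=\hat\eta_1-4\kappa_f\theta_1\theta_2^2/((1-\theta_1)\sigma_{\min})$; $\sigma_{\mathrm{succ}}=\max\big(\theta_1\theta_2^2(L+\kappa_B+2\kappa_h+4\kappa_f+2\kappa_\nabla)/((1-\theta_1)(1-\hat\eta_2)),\ \lambda^{-1}\big)$; $\sigma_{\max}=\max(\sigma_0,\gamma_2\sigma_{\mathrm{succ}})$ (an upper bound on all $\sigma_k$); $\nu_{\min}=\theta_1/(\kappa_B+\sigma_{\max})$, so that $\nu_k\ge\nu_{\min}$ for all $k$. *)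

(* Defs.v *)
From mathcomp Require Import all_boot all_order all_algebra.
From mathcomp Require Import all_classical all_reals all_analysis.
Set Implicit Arguments. Unset Strict Implicit. Unset Printing Implicit Defensive.
Import Order.TTheory GRing.Theory Num.Theory.
Import numFieldNormedType.Exports.
Local Open Scope classical_set_scope.
Local Open Scope ring_scope.

Section Defs.
Variables (R : realType) (n : nat).
Local Notation vec := 'rV[R]_n.

Definition dotp (u v : vec) : R := \sum_(i < n) u ord0 i * v ord0 i.
Definition enorm (v : vec) : R := Num.sqrt (\sum_(i < n) v ord0 i ^+ 2).

(* spectral norm: sup of ||B v|| over ||v|| <= 1 (B v written v *m B^T for rows) *)
Definition opnorm (B : 'M[R]_n) : R :=
  sup [set enorm (v *m B^T) | v in [set v : vec | enorm v <= 1]].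

Definition quad (B : 'M[R]_n) (s : vec) : R := (s *m B *m s^T) ord0 ord0.

Definition proper_fun (g : vec -> \bar R) : Prop :=
  (forall x, g x <> -oo%E) /\ (exists x, exists r : R, g x = r%:E).

Definition frechet_subgrad (g : vec -> \bar R) (x v : vec) : Prop :=
  (exists r : R, g x = r%:E) /\
  forall e : R, 0 < e -> exists2 d : R, 0 < d &
    forall y : vec, enorm (y - x) < d ->
      (g x + (dotp v (y - x) - e * enorm (y - x))%:E <= g y)%E.

Definition limiting_subgrad (g : vec -> \bar R) (x v : vec) : Prop :=
  exists (xs vs : nat -> vec),
    xs @ \oo --> x /\ (fun j => g (xs j)) @ \oo --> g x /\ vs @ \oo --> v /\
    forall j, frechet_subgrad g (xs j) (vs j).

Definition nu_of (th1 : R) (B : 'M[R]_n) (sigma : R) : R := th1 / (opnorm B + sigma).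
Definition phi_cp (fh : R) (g : vec) (s : vec) : R := fh + dotp g s.
Definition m_cp (fh : R) (g : vec) (psix : vec -> \bar R) (nuinv : R) (s : vec) : \bar R :=
  ((phi_cp fh g s + 2^-1 * nuinv * enorm s ^+ 2)%:E + psix s)%E.
Definition phi_q (fh : R) (g : vec) (B : 'M[R]_n) (s : vec) : R :=
  fh + dotp g s + 2^-1 * quad B s.
Definition m_q (fh : R) (g : vec) (B : 'M[R]_n) (psix : vec -> \bar R) (sigma : R) (s : vec) : \bar R :=
  ((phi_q fh g B s + 2^-1 * sigma * enorm s ^+ 2)%:E + psix s)%E.

Definition xi_cp (fh : R) (g : vec) (psix : vec -> \bar R) (scp : vec) : \bar R :=
  ((phi_cp fh g (0%R : vec))%:E + psix (0%R : vec) - ((phi_cp fh g scp)%:E + psix scp))%E.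

Definition pred_decr (fh : R) (g : vec) (B : 'M[R]_n) (psix : vec -> \bar R) (s : vec) : \bar R :=
  ((phi_q fh g B (0%R : vec))%:E + psix (0%R : vec) - ((phi_q fh g B s)%:E + psix s))%E.

Definition act_decr (h : vec -> \bar R) (x s : vec) (fh0 fh1 : R) : \bar R :=
  ((fh0%:E + h x) - (fh1%:E + h (x + s)%R))%E.

(* rho_k = numerator / denominator; computed on the real parts (fine), with
   the MathComp convention r / 0 = 0 *)
Definition rho_hat (num den : \bar R) : R := fine num / fine den.

End Defs.

(* Main.v *)
Require Import Defs.
From mathcomp Require Import all_boot all_order all_algebra.
From mathcomp Require Import all_classical all_reals all_analysis.
From mathcomp Require Import ring lra.
Import Order.TTheory GRing.Theory Num.Theory.
Import numFieldNormedType.Exports.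
Local Open Scope classical_set_scope.
Local Open Scope ring_scope.

Set Implicit Arguments. Unset Strict Implicit.

Section Vec.
Variables (R : realType) (n : nat).
Local Notation vec := 'rV[R]_n.

Lemma cs_sum (a b : 'I_n -> R) :
  (\sum_i a i * b i) ^+ 2 <= (\sum_i a i ^+ 2) * (\sum_i b i ^+ 2).
Proof.
set A := \sum_i a i ^+ 2; set Bq := \sum_i b i ^+ 2; set C := \sum_i a i * b i.
have A0 : 0 <= A by apply: sumr_ge0 => i _; exact: sqr_ge0.
have B0 : 0 <= Bq by apply: sumr_ge0 => i _; exact: sqr_ge0.
have key : 0 <= \sum_i (Bq * a i - C * b i) ^+ 2 by apply: sumr_ge0 => i _; exact: sqr_ge0.
have E : \sum_i (Bq * a i - C * b i) ^+ 2 = Bq * (A * Bq - C ^+ 2).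
  rewrite (eq_bigr (fun i => Bq ^+ 2 * a i ^+ 2 - (2 * Bq * C) * (a i * b i) + C ^+ 2 * b i ^+ 2)); last by move=> i _; ring.
  rewrite big_split /= sumrB -!mulr_sumr -/A -/Bq -/C; ring.
rewrite E in key.
case: (ltrgtP Bq 0) => [|Bp|Bz]; first by rewrite ltNge B0.
  by rewrite -subr_ge0; rewrite pmulr_rge0 in key.
have bz : forall i, b i = 0.
  move=> i; apply/eqP; rewrite -sqrf_eq0; apply/eqP.
  move/eqP: Bz; rewrite psumr_eq0; last by move=> j _; exact: sqr_ge0.
  by move/allP => /(_ i (mem_index_enum _)) /implyP /(_ isT) /eqP.
have -> : C = 0 by rewrite /C; apply: big1 => i _; rewrite bz mulr0.
by rewrite expr0n /= mulr_ge0.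
Qed.

Lemma venorm_ge0 (v : vec) : 0 <= enorm v.
Proof. exact: sqrtr_ge0. Qed.

Lemma venorm_sq (v : vec) : enorm v ^+ 2 = \sum_i v ord0 i ^+ 2.
Proof. by rewrite sqr_sqrtr //; apply: sumr_ge0 => i _; exact: sqr_ge0. Qed.

Lemma venorm0 : enorm (0 : vec) = 0.
Proof. by rewrite /enorm big1 ?sqrtr0 // => i _; rewrite mxE expr0n. Qed.

Lemma venormZ (a : R) (v : vec) : enorm (a *: v) = `|a| * enorm v.
Proof.
rewrite /enorm (eq_bigr (fun i => a ^+ 2 * v ord0 i ^+ 2)); last first.
  by move=> i _; rewrite mxE exprMn.
by rewrite -mulr_sumr sqrtrM ?sqr_ge0 // sqrtr_sqr.
Qed.

Lemma dotp_cs (u v : vec) : `|dotp u v| <= enorm u * enorm v.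
Proof.
rewrite /enorm -sqrtrM; last by apply: sumr_ge0 => i _; exact: sqr_ge0.
rewrite -sqrtr_sqr ler_sqrt; last by apply: mulr_ge0; apply: sumr_ge0 => i _; exact: sqr_ge0.
exact: cs_sum.
Qed.

Lemma dotp0r (u : vec) : dotp u 0 = 0.
Proof. by rewrite /dotp big1 // => i _; rewrite mxE mulr0. Qed.

Lemma dotpBl (u v w : vec) : dotp (u - v) w = dotp u w - dotp v w.
Proof.
rewrite /dotp -sumrB; apply: eq_bigr => i _; rewrite !mxE; ring.
Qed.

Lemma quad0 (B : 'M[R]_n) : quad B 0 = 0.
Proof. by rewrite /quad mul0mx mul0mx mxE. Qed.

End Vec.

Section Op.
Variables (R : realType) (n : nat).
Local Notation vec := 'rV[R]_n.

Lemma mul_frob (v : vec) (M : 'M[R]_n) :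
  enorm (v *m M) <= enorm v * Num.sqrt (\sum_j \sum_i M i j ^+ 2).
Proof.
rewrite /enorm -sqrtrM; last by apply: sumr_ge0 => i _; exact: sqr_ge0.
rewrite ler_sqrt; last by apply: mulr_ge0; do ?(apply: sumr_ge0 => ? _); exact: sqr_ge0.
rewrite mulr_sumr; apply: ler_sum => j _.
rewrite mxE; exact: cs_sum.
Qed.

Lemma opnorm_hassup (B : 'M[R]_n) :
  has_sup [set enorm (v *m B^T) | v in [set v : vec | enorm v <= 1]].
Proof.
split; first by exists (enorm (0 *m B^T)); exists 0 => //=; rewrite venorm0 ler01.
exists (Num.sqrt (\sum_j \sum_i B^T i j ^+ 2)) => _ [v /= Hv <-].
apply: (le_trans (mul_frob v B^T)).
rewrite -[X in _ <= X]mul1r ler_wpM2r //; exact: sqrtr_ge0.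
Qed.

Lemma opnorm_ge0 (B : 'M[R]_n) : 0 <= opnorm B.
Proof.
have H := sup_upper_bound (opnorm_hassup B).
have := H (enorm (0 : vec)); rewrite venorm0; apply.
exists 0 => /=; first by rewrite venorm0 ler01.
by rewrite mul0mx /enorm big1 ?sqrtr0 // => i _; rewrite mxE expr0n.
Qed.

Lemma opnorm_bound (B : 'M[R]_n) (s : vec) :
  enorm (s *m B^T) <= opnorm B * enorm s.
Proof.
have [s0|sn0] := eqVneq (enorm s) 0.
  have -> : s = 0.
    apply/rowP => i; rewrite mxE; apply/eqP; rewrite -sqrf_eq0; apply/eqP.
    move: s0; rewrite /enorm => /eqP; rewrite sqrtr_eq0 => Hle.
    have Hs : \sum_i s ord0 i ^+ 2 = 0.
      by apply/eqP; rewrite eq_le Hle; apply: sumr_ge0 => ? _; exact: sqr_ge0.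
    move/eqP: Hs; rewrite psumr_eq0; last by move=> j _; exact: sqr_ge0.
    by move/allP => /(_ i (mem_index_enum _)) /implyP /(_ isT) /eqP.
  by rewrite mul0mx /enorm big1 ?sqrtr0 ?mulr0 // => i _; rewrite mxE expr0n.
have sp : 0 < enorm s by rewrite lt_def sn0 venorm_ge0.
have H := sup_upper_bound (opnorm_hassup B).
have : enorm ((enorm s)^-1 *: s *m B^T) <= opnorm B.
  apply: H; exists ((enorm s)^-1 *: s) => //=.
  by rewrite venormZ ger0_norm ?invr_ge0 ?venorm_ge0 // mulVf.
rewrite -scalemxAl venormZ ger0_norm ?invr_ge0 ?venorm_ge0 //.
by rewrite ler_pdivrMl // mulrC.
Qed.

Lemma quad_dotp (B : 'M[R]_n) (s : vec) : quad B s = dotp (s *m B) s.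
Proof. rewrite /quad /dotp mxE; apply: eq_bigr => i _; congr (_ * _); by rewrite mxE. Qed.

Lemma quad_bound (B : 'M[R]_n) (s : vec) : B^T = B ->
  `|quad B s| <= opnorm B * enorm s ^+ 2.
Proof.
move=> BT; rewrite quad_dotp; apply: (le_trans (dotp_cs _ _)).
rewrite -{1}BT expr2 mulrA ler_wpM2r ?venorm_ge0 //; exact: opnorm_bound.
Qed.
End Op.

Lemma real_core (R : realType) (th1 th2 kf kgrad kh L kB eta1h eta2h smin sig on nuinv q ss N D decr : R) :
  0 < th1 < 1 -> th1 * nuinv = on + sig -> 0 <= on <= kB -> smin <= sig -> 0 < smin ->
  0 < kf -> 0 <= q -> 0 <= ss -> ss <= th2 ^+ 2 * q ->
  (1 - th1) * (2^-1 * nuinv * q) <= D ->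
  `|N - D| <= 2^-1 * (L + kB + 2 * kh + 4 * kf + 2 * kgrad) * ss ->
  N - 2 * kf * ss <= decr ->
  0 <= L + kB + 2 * kh + 4 * kf + 2 * kgrad ->
  (0 < eta1h -> eta1h <= N / D ->
     2^-1 * (eta1h - 4 * kf * th1 * th2 ^+ 2 / ((1 - th1) * smin)) * (1 - th1) * (nuinv * q) <= decr) /\
  (0 < q -> eta2h < 1 ->
     th1 * th2 ^+ 2 * (L + kB + 2 * kh + 4 * kf + 2 * kgrad) / ((1 - th1) * (1 - eta2h)) <= sig ->
     eta2h <= N / D).
Proof.
move=> /andP[th0 th1l] Hnu /andP[on0 onB] Hsig sm0 kf0 q0 ss0 Hss HD HND Hdec HC0.
have nuinv0 : 0 < nuinv.
  have : 0 < th1 * nuinv by rewrite Hnu; lra.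
  by rewrite pmulr_rgt0.
have D0 : 0 <= D.
  apply: le_trans HD; apply: mulr_ge0; first lra.
  by apply: mulr_ge0 => //; apply: mulr_ge0; [lra | exact: ltW].
split.
- move=> e0 He.
  have Dp : 0 < D.
    rewrite lt_def D0 andbT; apply/negP => /eqP D00.
    by move: He; rewrite D00 invr0 mulr0; lra.
  have HN : eta1h * D <= N by rewrite -ler_pdivlMr.
  set Z := th1 * nuinv / smin.
  have Z1 : 1 <= Z by rewrite /Z ler_pdivlMr // mul1r Hnu; lra.
  have Eq : 2^-1 * (eta1h - 4 * kf * th1 * th2 ^+ 2 / ((1 - th1) * smin)) * (1 - th1) * (nuinv * q)
      = eta1h * ((1 - th1) * (2^-1 * nuinv * q)) - 2 * kf * (th2 ^+ 2 * q) * Z.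
    rewrite /Z; field; apply/andP; split; apply/eqP; lra.
  rewrite Eq.
  have T1 : eta1h * ((1 - th1) * (2^-1 * nuinv * q)) <= eta1h * D by rewrite ler_pM2l.
  have T2 : 2 * kf * ss <= 2 * kf * (th2 ^+ 2 * q) by rewrite ler_pM2l //; lra.
  have T3 : 2 * kf * (th2 ^+ 2 * q) <= 2 * kf * (th2 ^+ 2 * q) * Z.
    rewrite -[X in X <= _]mulr1 ler_wpM2l //; apply: mulr_ge0; first lra.
    by apply: mulr_ge0 => //; exact: sqr_ge0.
  lra.
- move=> qp e2 HK.
  set C := L + kB + 2 * kh + 4 * kf + 2 * kgrad in HK HND HC0 *.
  have Dp : 0 < (1 - th1) * (2^-1 * nuinv * q).
    by apply: mulr_gt0; [lra | apply: mulr_gt0 => //; apply: mulr_gt0 => //; lra].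
  have Dp' : 0 < D by exact: lt_le_trans HD.
  rewrite ler_pdivlMr //.
  have K1 : th2 ^+ 2 * C <= (1 - eta2h) * (1 - th1) * nuinv.
    have : th1 * th2 ^+ 2 * C / ((1 - th1) * (1 - eta2h)) <= th1 * nuinv by lra.
    rewrite ler_pdivrMr; last by apply: mulr_gt0; lra.
    move=> H; rewrite -(@ler_pM2l _ th1) //.
    have E1 : th1 * (th2 ^+ 2 * C) = th1 * th2 ^+ 2 * C by ring.
    have E2 : th1 * ((1 - eta2h) * (1 - th1) * nuinv) = th1 * nuinv * ((1 - th1) * (1 - eta2h)) by ring.
    lra.
  have K2 : 2^-1 * C * ss <= 2^-1 * (th2 ^+ 2 * C) * q.
    have -> : 2^-1 * (th2 ^+ 2 * C) * q = 2^-1 * C * (th2 ^+ 2 * q) by ring.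
    by rewrite ler_wpM2l //; apply: mulr_ge0 => //; lra.
  have K3 : 2^-1 * (th2 ^+ 2 * C) * q <= 2^-1 * ((1 - eta2h) * (1 - th1) * nuinv) * q.
    by rewrite ler_wpM2r // ler_wpM2l //; lra.
  have K4 : (1 - eta2h) * ((1 - th1) * (2^-1 * nuinv * q)) <= (1 - eta2h) * D.
    by rewrite ler_wpM2l //; lra.
  have K5 : D - N <= `|N - D| by rewrite distrC ler_norm.
  have E5 : 2^-1 * ((1 - eta2h) * (1 - th1) * nuinv) * q = (1 - eta2h) * ((1 - th1) * (2^-1 * nuinv * q)) by ring.
  lra.
Qed.

Lemma iter_facts (R : realType) (n : nat) (f : 'rV[R]_n -> R) (gradf : 'rV[R]_n -> 'rV[R]_n)
  (h : 'rV[R]_n -> \bar R) (psi : 'rV[R]_n -> 'rV[R]_n -> \bar R)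
  (th1 th2 kf kgrad kh L kB eta1h eta2h smin sig : R) (xk sk scpk gk : 'rV[R]_n)
  (Bk : 'M[R]_n) (fh0 fh1 hx : R) :
  h xk = hx%:E ->
  psi xk 0 = h xk ->
  (forall w, psi xk w <> -oo%E) ->
  Bk^T = Bk ->
  (m_cp fh0 gk (psi xk) (nu_of th1 Bk sig)^-1 scpk <= m_cp fh0 gk (psi xk) (nu_of th1 Bk sig)^-1 0)%E ->
  (m_q fh0 gk Bk (psi xk) sig sk <= m_q fh0 gk Bk (psi xk) sig scpk)%E ->
  enorm sk <= th2 * enorm scpk ->
  (forall y v, `|f (y + v) - f y - dotp (gradf y) v| <= 2^-1 * L * enorm v ^+ 2) ->
  (forall v, (psi xk v = +oo%E /\ h (xk + v) = +oo%E) \/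
     exists a b : R, psi xk v = a%:E /\ h (xk + v) = b%:E /\ `|a - b| <= kh * enorm v ^+ 2) ->
  ((1 - th1)%:E * xi_cp fh0 gk (psi xk) scpk <= pred_decr fh0 gk Bk (psi xk) sk)%E ->
  `|f xk - fh0| <= kf * enorm sk ^+ 2 ->
  `|f (xk + sk) - fh1| <= kf * enorm sk ^+ 2 ->
  enorm (gradf xk - gk) <= kgrad * enorm sk ->
  0 < th1 < 1 -> opnorm Bk <= kB -> smin <= sig -> 0 < smin -> 0 < kf -> 0 <= th2 ->
  0 <= L + kB + 2 * kh + 4 * kf + 2 * kgrad ->
  exists hs : R, h (xk + sk) = hs%:E /\
  (0 < eta1h ->
   eta1h <= rho_hat (act_decr h xk sk fh0 fh1) (pred_decr fh0 gk Bk (psi xk) sk) ->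
   2^-1 * (eta1h - 4 * kf * th1 * th2 ^+ 2 / ((1 - th1) * smin)) * (1 - th1)
     * ((nu_of th1 Bk sig)^-1 * enorm scpk ^+ 2) <= (f xk + hx) - (f (xk + sk) + hs)) /\
  (0 < enorm scpk -> eta2h < 1 ->
   th1 * th2 ^+ 2 * (L + kB + 2 * kh + 4 * kf + 2 * kgrad) / ((1 - th1) * (1 - eta2h)) <= sig ->
   eta2h <= rho_hat (act_decr h xk sk fh0 fh1) (pred_decr fh0 gk Bk (psi xk) sk)).
Proof.
move=> Hhx Hpsi0 Hprop BT Hmcp Hmq Hsn HA1 HA3 HA4 HA6a HA6b HA6c Hth1 HonB Hsig sm0 kf0 th20 HC0.
have on0 := opnorm_ge0 Bk.
set nuinv := (nu_of th1 Bk sig)^-1.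
have Hnu : th1 * nuinv = opnorm Bk + sig.
  rewrite /nuinv /nu_of invf_div mulrC divfK //; apply/eqP; move: Hth1 => /andP[? ?]; lra.
move: Hmcp; rewrite /m_cp -/nuinv Hpsi0 Hhx.
case Epcp: (psi xk scpk) => [pcp| |]; last by move: (Hprop scpk); rewrite Epcp.
  2: by rewrite addey // leye_eq.
rewrite -!EFinD lee_fin /phi_cp dotp0r venorm0 expr0n /= mulr0 !addr0 => Hmcp.
case: (HA3 sk) => [[Hps _]|[ps [hs [Eps [Ehs Hkh]]]]].
  by move: Hmq; rewrite /m_q Hps Epcp addey // leye_eq.
exists hs; split => //.
move: HA4; rewrite /xi_cp /pred_decr Epcp Eps Hpsi0 Hhx -!EFinD -EFinM lee_fin.
rewrite /rho_hat /act_decr Hhx Ehs -!EFinD /=.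
rewrite /phi_cp /phi_q !dotp0r quad0 mulr0 !addr0.
move=> HA4. match type of HA4 with ?t => idtac "HA4TYPE" t end.
have ss0 : 0 <= enorm sk ^+ 2 by exact: sqr_ge0.
have Hss : enorm sk ^+ 2 <= th2 ^+ 2 * enorm scpk ^+ 2.
  rewrite -exprMn; apply: ler_pM; rewrite ?venorm_ge0 //.
have HD : (1 - th1) * (2^-1 * nuinv * enorm scpk ^+ 2) <= fh0 + hx - (fh0 + dotp gk sk + 2^-1 * quad Bk sk + ps).
  apply: le_trans _ HA4; apply: ler_wpM2l; last lra.
  by move: Hth1 => /andP[? ?]; lra.
have Hq := quad_bound sk BT.
have Hcs := dotp_cs (gradf xk - gk) sk.
rewrite dotpBl in Hcs.
have Hg : `|dotp (gradf xk) sk - dotp gk sk| <= kgrad * enorm sk ^+ 2.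
  apply: le_trans Hcs _; rewrite expr2 mulrA ler_wpM2r ?venorm_ge0 //.
have Hq' : `|quad Bk sk| <= kB * enorm sk ^+ 2.
  apply: le_trans Hq _; rewrite ler_wpM2r //.
have HA1' := HA1 xk sk.
move: HA6a HA6b HA1' Hg Hq' Hkh; rewrite !ler_norml => /andP[a1 a2] /andP[b1 b2] /andP[c1 c2] /andP[d1 d2] /andP[e1 e2] /andP[g1 g2].
have HND : `|(fh0 + hx - (fh1 + hs)) - (fh0 + hx - (fh0 + dotp gk sk + 2^-1 * quad Bk sk + ps))|
    <= 2^-1 * (L + kB + 2 * kh + 4 * kf + 2 * kgrad) * enorm sk ^+ 2.
  rewrite ler_norml; apply/andP; split; lra.
have Hdec : (fh0 + hx - (fh1 + hs)) - 2 * kf * enorm sk ^+ 2 <= f xk + hx - (f (xk + sk) + hs) by lra.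
have onB : 0 <= opnorm Bk <= kB by rewrite on0 HonB.
have q0 : 0 <= enorm scpk ^+ 2 by exact: sqr_ge0.
have [HH1 HH2] := @real_core R th1 th2 kf kgrad kh L kB eta1h eta2h smin sig (opnorm Bk) nuinv
   _ _ _ _ _ Hth1 Hnu onB Hsig sm0 kf0 q0 ss0 Hss HD HND Hdec HC0.
split; first by move=> e0 He; apply: HH1.
move=> qp ee2 HK; apply: HH2 => //; exact: exprn_gt0.
Qed.

Unset Implicit Arguments. Set Strict Implicit.

Theorem lemma3p6
  (R : realType) (n : nat)
  (* problem data *)
  (f : 'rV[R]_n -> R) (gradf : 'rV[R]_n -> 'rV[R]_n)
  (h : 'rV[R]_n -> \bar R) (psi : 'rV[R]_n -> 'rV[R]_n -> \bar R) (* psi x s = psi(s;x) *)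
  (* constants *)
  (kf kgrad g1 g2 g3 eta1h eta2h th1 th2 smin : R)
  (L kB kh lam low eps : R)
  (* iterates and per-iteration quantities *)
  (x : nat -> 'rV[R]_n) (sigma : nat -> R) (B : nat -> 'M[R]_n)
  (scp s : nat -> 'rV[R]_n)
  (fh0 fh1 : nat -> R)            (* fhat(x_k), fhat(x_k + s_k) at iteration k *)
  (gh : nat -> 'rV[R]_n) :        (* gradient approximation at x_k at iteration k *)
  (* f continuously differentiable with gradient gradf *)
  (forall y, differentiable f y /\ forall v, 'd f y v = dotp (gradf y) v) ->
  continuous gradf ->
  (* h proper lsc *)
  proper_fun h -> lower_semicontinuous h ->
  (* psi(.;x) proper, lsc, psi(0;x) = h(x), d psi(0;x) included in d h(x) *)
  (forall y, proper_fun (psi y) /\ lower_semicontinuous (psi y)) ->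
  (forall y, psi y 0 = h y) ->
  (forall y v, limiting_subgrad (psi y) 0 v -> limiting_subgrad h y v) ->
  (* uniform prox-boundedness with parameter lam *)
  0 < lam ->
  (forall y lam', 0 < lam' < lam -> exists b : R,
      forall w, (b%:E <= psi y w + (enorm w ^+ 2 / (2 * lam'))%:E)%E) ->
  (* algorithm constants *)
  0 < kf -> 0 < kgrad ->
  0 < g3 <= 1 -> 1 < g1 <= g2 ->
  0 < eta1h <= eta2h -> eta2h < 1 ->
  0 < th1 < 1 -> 1 < th2 ->
  4 * kf * th1 * th2 ^+ 2 / (eta1h * (1 - th1)) < smin ->
  smin <= sigma 0 ->
  (* the iteration *)
  (forall k, (B k)^T = B k) ->
  (forall k, (m_cp (fh0 k) (gh k) (psi (x k)) (nu_of th1 (B k) (sigma k))^-1 (scp k)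
              <= m_cp (fh0 k) (gh k) (psi (x k)) (nu_of th1 (B k) (sigma k))^-1 0)%E) ->
  (forall k, (m_q (fh0 k) (gh k) (B k) (psi (x k)) (sigma k) (s k)
              <= m_q (fh0 k) (gh k) (B k) (psi (x k)) (sigma k) (scp k))%E
             /\ enorm (s k) <= th2 * enorm (scp k)) ->
  (forall k, x k.+1 =
     if eta1h <= rho_hat (act_decr h (x k) (s k) (fh0 k) (fh1 k))
                         (pred_decr (fh0 k) (gh k) (B k) (psi (x k)) (s k))
     then x k + s k else x k) ->
  (forall k, let r := rho_hat (act_decr h (x k) (s k) (fh0 k) (fh1 k))
                              (pred_decr (fh0 k) (gh k) (B k) (psi (x k)) (s k)) in
     exists sg : R,
       (eta2h <= r -> g3 * sigma k <= sg <= sigma k) /\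
       (eta1h <= r < eta2h -> sigma k <= sg <= g1 * sigma k) /\
       (r < eta1h -> g1 * sigma k <= sg <= g2 * sigma k) /\
       sigma k.+1 = Num.max sg smin) ->
  (* (A1) *)
  0 <= L ->
  (forall y v, `|f (y + v) - f y - dotp (gradf y) v| <= 2^-1 * L * enorm v ^+ 2) ->
  (* (A2) *)
  0 < kB -> (forall k, opnorm (B k) <= kB) ->
  (* (A3) *)
  0 < kh ->
  (forall y v, (psi y v = +oo%E /\ h (y + v) = +oo%E) \/
     exists a b : R, psi y v = a%:E /\ h (y + v) = b%:E /\ `|a - b| <= kh * enorm v ^+ 2) ->
  (* (A4) *)
  (forall k, ((1 - th1)%:E * xi_cp (fh0 k) (gh k) (psi (x k)) (scp k)
              <= pred_decr (fh0 k) (gh k) (B k) (psi (x k)) (s k))%E) ->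
  (* (A6) *)
  (forall k, `|f (x k) - fh0 k| <= kf * enorm (s k) ^+ 2 /\
             `|f (x k + s k) - fh1 k| <= kf * enorm (s k) ^+ 2 /\
             enorm (gradf (x k) - gh k) <= kgrad * enorm (s k)) ->
  (* (A7) *)
  (forall y, (low%:E <= (f y)%:E + h y)%E) ->
  (* infinitely many successful iterations *)
  (forall N, exists k, (N <= k)%N /\
     eta1h <= rho_hat (act_decr h (x k) (s k) (fh0 k) (fh1 k))
                      (pred_decr (fh0 k) (gh k) (B k) (psi (x k)) (s k))) ->
  0 < eps ->
  let eta1 := eta1h - 4 * kf * th1 * th2 ^+ 2 / ((1 - th1) * smin) in
  let sigma_succ := Num.max (th1 * th2 ^+ 2 * (L + kB + 2 * kh + 4 * kf + 2 * kgrad)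
                               / ((1 - th1) * (1 - eta2h))) lam^-1 in
  let sigma_max := Num.max (sigma 0) (g2 * sigma_succ) in
  let nu_min := th1 / (kB + sigma_max) in
  (* |S(eps) /\ [0,N)| <= omega_s eps^-2 for every N, where
     k in S(eps) iff k successful and k < k_eps, i.e. nu_j^-1 ||scp_j|| >= eps for all j <= k *)
  forall N : nat,
    (((size [seq k <- iota 0%N N |
        `[< eta1h <= rho_hat (act_decr h (x k) (s k) (fh0 k) (fh1 k))
                             (pred_decr (fh0 k) (gh k) (B k) (psi (x k)) (s k))
            /\ forall j, (j <= k)%N ->
                 eps <= (nu_of th1 (B j) (sigma j))^-1 * enorm (scp j) >]])%:R : R)%:E
     <= ((f (x 0%N))%:E + h (x 0%N) - low%:E)
        * ((2^-1 * eta1 * (1 - th1) * nu_min)^-1 * eps ^- 2)%:E)%E.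
Proof.
move=> Hdiff Hcont Hhprop Hhlsc Hpsiprop Hpsi0 Hsub lam0 Hprox kf0 kg0 Hg3 Hg1 Heta1 Heta2 Hth1 Hth2 Hsmin Hsig0 BT Hmcp Hmq Hupd Hsigup L0 HA1 kB0 HBk kh0 HA3 HA4 HA6 HA7 Hinf eps0 eta1 sigma_succ sigma_max nu_min N.
have Hth1' := Hth1.
move: Hg3 Hg1 Heta1 Hth1 => /andP[g30 g31] /andP[g1g g12] /andP[e1h0 e12] /andP[th10 th11].
have X0 : 0 <= 4 * kf * th1 * th2 ^+ 2.
  apply: mulr_ge0; last exact: sqr_ge0.
  by apply: mulr_ge0; [apply: mulr_ge0 |]; lra.
have sm0 : 0 < smin.
  apply: le_lt_trans Hsmin; apply: divr_ge0 => //; apply: mulr_ge0; lra.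
have eta1p : 0 < eta1.
  have := Hsmin; rewrite ltr_pdivrMr; last by apply: mulr_gt0; lra.
  move=> H; rewrite /eta1 subr_gt0 ltr_pdivrMr; last by apply: mulr_gt0; lra.
  have -> : eta1h * ((1 - th1) * smin) = smin * (eta1h * (1 - th1)) by ring.
  exact: H.
have sig_ge : forall k, smin <= sigma k.
  elim=> [//|k _]; have [sg [_ [_ [_ ->]]]] := Hsigup k.
  by rewrite le_max lexx orbT.
have C0 : 0 <= L + kB + 2 * kh + 4 * kf + 2 * kgrad by lra.
have [hprop _] := Hhprop.
have psiprop : forall y w, psi y w <> -oo%E by move=> y; have [[]] := Hpsiprop y.
have th20 : 0 <= th2 by lra.
set c := 2^-1 * eta1 * (1 - th1).
have c0 : 0 < c by apply: mulr_gt0; [apply: mulr_gt0 => //; lra | lra].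
have smax0 : smin <= sigma_max by apply: le_trans Hsig0 _; rewrite /sigma_max le_max lexx.
have numin0 : 0 < nu_min by apply: divr_gt0 => //; lra.
have M0 : 0 < (2^-1 * eta1 * (1 - th1) * nu_min)^-1 * eps ^- 2.
  rewrite -invfM invr_gt0; apply: mulr_gt0; last exact: exprn_gt0.
  by rewrite -/c; apply: mulr_gt0.
case Eh0: (h (x 0%N)) => [h0| |]; last by have := hprop (x 0%N); rewrite Eh0.
  2: by rewrite addey // addye // gt0_mulye ?leey // lte_fin.
pose rho k := rho_hat (act_decr h (x k) (s k) (fh0 k) (fh1 k))
                     (pred_decr (fh0 k) (gh k) (B k) (psi (x k)) (s k)).
have IF : forall k hk, h (x k) = hk%:E -> exists hs, h (x k + s k) = hs%:E /\
   (0 < eta1h -> eta1h <= rho k ->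
     c * ((nu_of th1 (B k) (sigma k))^-1 * enorm (scp k) ^+ 2)
       <= f (x k) + hk - (f (x k + s k) + hs)) /\
   (0 < enorm (scp k) -> eta2h < 1 ->
     th1 * th2 ^+ 2 * (L + kB + 2 * kh + 4 * kf + 2 * kgrad) / ((1 - th1) * (1 - eta2h)) <= sigma k ->
     eta2h <= rho k).
  move=> k hk Ehk; have [A6a [A6b A6c]] := HA6 k; have [Hmq1 Hmq2] := Hmq k.
  exact: (iter_facts eta1h eta2h Ehk (Hpsi0 _) (psiprop _) (BT k) (Hmcp k) Hmq1 Hmq2 HA1
    (fun v => HA3 (x k) v) (HA4 k) A6a A6b A6c Hth1' (HBk k) (sig_ge k) sm0 kf0 th20 C0).
have fin : forall k, exists hk, h (x k) = hk%:E.
  elim=> [|k [hk Ehk]]; first by exists h0.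
  have [hs [Ehs _]] := IF k hk Ehk.
  by rewrite Hupd; case: ifP => _; [exists hs | exists hk].
set K1 := th1 * th2 ^+ 2 * (L + kB + 2 * kh + 4 * kf + 2 * kgrad) / ((1 - th1) * (1 - eta2h)).
have K1s : K1 <= sigma_succ by rewrite /sigma_succ le_max lexx.
have g2s : g2 * sigma_succ <= sigma_max by rewrite /sigma_max le_max lexx orbT.
have sigb : forall k, (forall j, (j < k)%N -> 0 < enorm (scp j)) -> sigma k <= sigma_max.
  elim=> [_|k IH Hj]; first by rewrite /sigma_max le_max lexx.
  have IHk := IH (fun j Hjk => Hj j (ltn_trans Hjk (ltnSn k))).
  have [hk Ehk] := fin k.
  have [hs [_ [_ Hvs]]] := IF k hk Ehk.
  move: (Hsigup k) => /= [sg [C1 [C2 [C3 ->]]]].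
  rewrite ge_max smax0 andbT.
  have sk0 : 0 <= sigma k by apply: le_trans (sig_ge k); exact: ltW.
  case: (lerP K1 (sigma k)) => HK.
    have r2 := Hvs (Hj k (ltnSn k)) Heta2 HK.
    by have /andP[_ Hsg] := C1 r2; apply: le_trans Hsg IHk.
  have ss : sigma k <= sigma_succ by apply: le_trans K1s; exact: ltW.
  have g2ss : g2 * sigma k <= sigma_max.
    apply: le_trans g2s; apply: ler_wpM2l => //; lra.
  case: (lerP eta2h (rho k)) => r2.
    by have /andP[_ Hsg] := C1 r2; apply: le_trans Hsg IHk.
  case: (lerP eta1h (rho k)) => r1.
    have /andP[_ Hsg] := C2 ltac:(by apply/andP).
    apply: le_trans Hsg _; apply: le_trans g2ss; apply: ler_wpM2r => //; lra.
  by have /andP[_ Hsg] := C3 r1; apply: le_trans Hsg g2ss.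
have nub : forall k, sigma k <= sigma_max -> nu_min <= nu_of th1 (B k) (sigma k).
  move=> k Hk; rewrite /nu_min /nu_of; apply: ler_wpM2l; first lra.
  have on0 := opnorm_ge0 (B k).
  have := sig_ge k => sgk.
  rewrite lef_pV2 ?posrE; first by apply: lerD => //; exact: HBk.
    lra.
  lra.
pose F k := f (x k) + fine (h (x k)).
have Fdec : forall k, (if eta1h <= rho k then c * ((nu_of th1 (B k) (sigma k))^-1 * enorm (scp k) ^+ 2) else 0)
    <= F k - F k.+1.
  move=> k; have [hk Ehk] := fin k; have [hs [Ehs [H1 _]]] := IF k hk Ehk.
  rewrite /F Hupd -/(rho k); case: ifP => Hs; rewrite ?Ehs Ehk /=; last lra.
  exact: H1.
have Fge0 : forall k, 0 <= F k - F k.+1.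
  move=> k; apply: le_trans (Fdec k); case: ifP => _ //.
  apply: mulr_ge0; first exact: ltW.
  apply: mulr_ge0; last exact: sqr_ge0.
  rewrite invr_ge0 /nu_of; apply: divr_ge0; first lra.
  by apply: addr_ge0; [exact: opnorm_ge0 | apply: le_trans (sig_ge k); exact: ltW].
pose P k := eta1h <= rho k /\ forall j, (j <= k)%N ->
                 eps <= (nu_of th1 (B j) (sigma j))^-1 * enorm (scp j).
have cnt : forall M, (size [seq k <- iota 0%N M | `[< P k >]])%:R * (c * nu_min * eps ^+ 2)
    <= F 0%N - F M.
  elim=> [|M IH]; first by rewrite /= mul0r subrr.
  have -> : iota 0 M.+1 = iota 0 M ++ [:: M] by rewrite -addn1 iotaD.
  rewrite filter_cat size_cat natrD mulrDl.
  have E3 : F 0%N - F M.+1 = (F 0%N - F M) + (F M - F M.+1) by ring.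
  rewrite E3 /=; case: asboolP => HP /=; last first.
    by rewrite mul0r addr0 -[X in X <= _]addr0; apply: lerD => //; exact: Fge0.
  rewrite mul1r; apply: lerD => //.
  have [Hs Hj] := HP.
  have Hpos : forall j, (j <= M)%N -> 0 < enorm (scp j).
    move=> j /Hj Hjj; rewrite lt_def venorm_ge0 andbT; apply/negP => /eqP E0.
    by move: Hjj; rewrite E0 mulr0; lra.
  have sM := sigb M (fun j Hjm => Hpos j (ltnW Hjm)).
  have nuM := nub M sM.
  have := Fdec M; rewrite Hs => HF; apply: le_trans HF.
  rewrite -mulrA; apply: ler_wpM2l; first exact: ltW.
  set nu := nu_of th1 (B M) (sigma M).
  have nu0 : 0 < nu by apply: lt_le_trans nuM.
  have e1 : eps <= nu^-1 * enorm (scp M) := Hj M (leqnn M).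
  have -> : nu^-1 * enorm (scp M) ^+ 2 = nu * (nu^-1 * enorm (scp M)) ^+ 2.
    by rewrite exprMn; field; rewrite gt_eqF.
  apply: ler_pM; [exact: ltW | exact: sqr_ge0 | exact: nuM |].
  by rewrite !expr2; apply: ler_pM; lra.
have [hN EhN] := fin N.
have lowN : low <= F N.
  by have := HA7 (x N); rewrite /F EhN lee_fin /=.
have Hc := cnt N.
rewrite -EFinD -EFinM lee_fin.
have F0 : F 0%N = f (x 0%N) + h0 by rewrite /F Eh0.
set Q := (2^-1 * eta1 * (1 - th1) * nu_min)^-1 * eps ^- 2.
have EQ : Q = (c * nu_min * eps ^+ 2)^-1 by rewrite /Q [RHS]invfM.
have P0 : 0 < c * nu_min * eps ^+ 2 by apply: mulr_gt0; [apply: mulr_gt0 | exact: exprn_gt0].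
rewrite EQ ler_pdivlMr //.
apply: le_trans Hc _; rewrite -F0; lra.
Qed.
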